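(* Let $N\geq 10^{100000}$ be a real number, let $f_N(x)=\dfrac{\log N+\log(x-1)}{\log x}$ for real $x>1$, and let $g_{k,N}(x)=(-1)^k f_N^{(k)}(x)$. Define polynomials $P_{1,1}(t)=1$, $P_{2,2}(t)=t+2$, $P_{3,3}(t)=2t^2+6t+6$, $P_{4,4}(t)=6t^3+22t^2+36t+24$, $P_{5,5}(t)=24t^4+100t^3+210t^2+240t+120$, $P_{6,6}(t)=120t^5+548t^4+1350t^3+2040t^2+1800t+720$ (equivalently $P_{1,1}=1$ and $P_{k+1,k+1}(t)=(kt+k+1)P_{k,k}(t)-tP_{k,k}'(t)$). Then for $1\leq k\leq 6$ and $x\geq 10^5$, $$\frac{0.999999\,P_{k,k}(\log x)\log N}{x^k\log^{k+1}x}<g_{k,N}(x)<\frac{P_{k,k}(\log x)\log N}{x^k\log^{k+1}x}.$$ Moreover, for $2\leq k\leq 6$ and $x\geq 10^5$, $$\frac{(k-1)!\log N}{x^k\log^2 x}<g_{k,N}(x)<\frac{\tau_k\log N}{x^k\log^2 x},$$ where $\tau_2=1.17372$, $\tau_3=2.56643$, $\tau_4=8.19823$, $\tau_5=34.4344$, $\tau_6=179.227$; and for $x\geq 10^5$, $$\frac{0.999999\log N}{x\log^2 x}<g_{1,N}(x)<\frac{\log N}{x\log^2 x}.$$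
   Context: $f_N^{(k)}$ denotes the $k$-th derivative of $f_N$ with respect to $x$; $\log$ is the natural logarithm. *)

(* Defs.v *)
From Stdlib Require Import Reals.
From Coquelicot Require Import Coquelicot.
Open Scope R_scope.

Definition fN (N x : R) : R := (ln N + ln (x - 1)) / ln x.

Definition gkN (k : nat) (N x : R) : R := (-1) ^ k * Derive_n (fN N) k x.

Definition Pkk (k : nat) (t : R) : R :=
  match k with
  | 1%nat => 1
  | 2%nat => t + 2
  | 3%nat => 2 * t ^ 2 + 6 * t + 6
  | 4%nat => 6 * t ^ 3 + 22 * t ^ 2 + 36 * t + 24
  | 5%nat => 24 * t ^ 4 + 100 * t ^ 3 + 210 * t ^ 2 + 240 * t + 120
  | 6%nat => 120 * t ^ 5 + 548 * t ^ 4 + 1350 * t ^ 3 + 2040 * t ^ 2 + 1800 * t + 720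
  | _ => 0
  end.

Definition tau (k : nat) : R :=
  match k with
  | 2%nat => 117372 / 100000
  | 3%nat => 256643 / 100000
  | 4%nat => 819823 / 100000
  | 5%nat => 344344 / 10000
  | 6%nat => 179227 / 1000
  | _ => 0
  end.

(* Main.v *)
Require Import Defs.
From Stdlib Require Import Reals Lra Lia Psatz.
From Coquelicot Require Import Coquelicot.
Open Scope R_scope.

Definition Q (k : nat) (t : R) : R := match k with 0%nat => 1 | _ => Pkk k t end.
Definition A (k : nat) (x : R) : R := Q k (ln x) / (x ^ k * ln x ^ (k + 1)).

Definition Sc (k : nat) (x d : R) : R :=
  match k with
  | 1%nat => 1 * A 0%nat x / d ^ 1
  | 2%nat => 1 * A 0%nat x / d ^ 2 + 2 * A 1%nat x / d ^ 1
  | 3%nat => 2 * A 0%nat x / d ^ 3 + 3 * A 1%nat x / d ^ 2 + 3 * A 2%nat x / d ^ 1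
  | 4%nat => 6 * A 0%nat x / d ^ 4 + 8 * A 1%nat x / d ^ 3 + 6 * A 2%nat x / d ^ 2 + 4 * A 3%nat x / d ^ 1
  | 5%nat => 24 * A 0%nat x / d ^ 5 + 30 * A 1%nat x / d ^ 4 + 20 * A 2%nat x / d ^ 3 + 10 * A 3%nat x / d ^ 2 + 5 * A 4%nat x / d ^ 1
  | 6%nat => 120 * A 0%nat x / d ^ 6 + 144 * A 1%nat x / d ^ 5 + 90 * A 2%nat x / d ^ 4 + 40 * A 3%nat x / d ^ 3 + 15 * A 4%nat x / d ^ 2 + 6 * A 5%nat x / d ^ 1
  | _ => 0
  end.

Definition G (L : R) (k : nat) (x : R) : R := (L + ln (x - 1)) * A k x - Sc k x (x - 1).

Lemma dA k x : (k < 6)%nat -> 1 < x -> is_derive (A k) x (- A (S k) x).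
Proof.
  intros Hk Hx.
  assert (H0 : 0 < x) by lra.
  assert (Hl : 0 < ln x) by (rewrite <- ln_1; apply ln_increasing; lra).
  destruct k as [|[|[|[|[|[|k]]]]]]; try lia;
  unfold A, Q, Pkk; simpl; auto_derive; repeat split; try lra; try (apply Rgt_not_eq; lra);
  try field; repeat split; apply Rgt_not_eq; try lra; repeat apply Rmult_lt_0_compat; lra.
Qed.

Lemma exA k x : (k < 6)%nat -> 1 < x -> ex_derive (A k) x.
Proof. intros; eexists; apply dA; auto. Qed.

Lemma DA k x : (k < 6)%nat -> 1 < x -> Derive (fun y => A k y) x = - A (S k) x.
Proof. intros; apply is_derive_unique, dA; auto. Qed.

Lemma dG L k x : (k < 6)%nat -> 1 < x -> is_derive (G L k) x (- G L (S k) x).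
Proof.
  intros Hk Hx.
  destruct k as [|[|[|[|[|[|k]]]]]]; try lia;
  unfold G, Sc; auto_derive;
  repeat split; try lra; try (apply exA; [lia|lra]);
  try (apply Rgt_not_eq; repeat apply Rmult_lt_0_compat; lra);
  repeat (rewrite DA; [|lia|lra]); change (x + - (1)) with (x - 1); field; apply Rgt_not_eq; lra.
Qed.

Lemma DnG N k : (k <= 6)%nat -> forall x, 1 < x ->
  Derive_n (fN N) k x = (-1) ^ k * G (ln N) k x.
Proof.
  induction k as [|k IH]; intros Hk x Hx.
  - simpl. unfold fN, G, A, Q, Sc. simpl. field.
    apply Rgt_not_eq. rewrite <- ln_1; apply ln_increasing; lra.
  - change (Derive_n (fN N) (S k) x) with (Derive (Derive_n (fN N) k) x).
    rewrite (Derive_ext_loc _ (fun y => (-1) ^ k * G (ln N) k y)).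
    + apply is_derive_unique.
      replace ((-1) ^ S k * G (ln N) (S k) x) with ((-1) ^ k * (- G (ln N) (S k) x)) by (simpl; ring).
      apply is_derive_scal. apply dG; [lia|lra].
    + apply (filter_imp (fun y => 1 < y)).
      * intros y Hy. apply IH; [lia|lra].
      * apply (open_gt 1). exact Hx.
Qed.

Lemma gG N k x : (k <= 6)%nat -> 1 < x -> gkN k N x = G (ln N) k x.
Proof.
  intros Hk Hx. unfold gkN. rewrite DnG by auto.
  rewrite <- Rmult_assoc, <- Rpow_mult_distr.
  replace (-1 * -1) with 1 by ring. rewrite pow1; ring.
Qed.
Lemma ln_lt_sub1 u : 1 < u -> ln u < u - 1.
Proof.
  intros Hu. assert (0 < ln u) by (rewrite <- ln_1; apply ln_increasing; lra).
  pose proof (exp_ineq1 (ln u) ltac:(lra)). rewrite exp_ln in H0; lra.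
Qed.

Definition atS (z : R) := 2 * (z + z^3/3 + z^5/5 + z^7/7 + z^9/9 + z^11/11 + z^13/13).

Lemma atanh_lb z : 0 < z < 1 -> atS z - z / 1000000000 < ln ((1 + z) / (1 - z)).
Proof.
  intros Hz.
  assert (H := incr_function (fun y => ln (1 + y) - ln (1 - y) - atS y + y / 1000000000) (-1) 1
    (fun y => 2 * y ^ 14 / (1 - y ^ 2) + / 1000000000)).
  assert (Hm : forall y : R, Rbar_lt (-1) y -> Rbar_lt y 1 ->
     is_derive (fun y => ln (1 + y) - ln (1 - y) - atS y + y / 1000000000) y
       (2 * y ^ 14 / (1 - y ^ 2) + / 1000000000)).
  { intros y H1 H2; simpl in H1, H2. unfold atS. auto_derive.
    - lra.
    - field. split; [|split]; try lra. intro Hc.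
      assert (y ^ 2 < 1) by nra. lra. }
  specialize (H Hm).
  assert (Hp : forall y : R, Rbar_lt (-1) y -> Rbar_lt y 1 ->
     2 * y ^ 14 / (1 - y ^ 2) + / 1000000000 > 0).
  { intros y H1 H2; simpl in H1, H2.
    assert (y ^ 2 < 1) by nra.
    assert (0 <= 2 * y ^ 14 / (1 - y ^ 2)).
    { apply Rmult_le_pos. replace (y^14) with ((y^7)^2) by ring. nra.
      apply Rlt_le, Rinv_0_lt_compat; lra. }
    assert (0 < / 1000000000) by (apply Rinv_0_lt_compat; lra). lra. }
  specialize (H Hp 0 z). simpl in H.
  assert (Hz' := H ltac:(lra) ltac:(lra) ltac:(lra)).
  replace (1 + 0) with 1 in Hz' by ring. replace (1 - 0) with 1 in Hz' by ring.
  rewrite ln_1 in Hz'. unfold atS in Hz' |- *.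
  rewrite ln_div by lra. lra.
Qed.

Lemma ln10_lb : 2302585 / 1000000 < ln 10.
Proof.
  assert (H2 := atanh_lb (1/3) ltac:(lra)).
  assert (H5 := atanh_lb (1/9) ltac:(lra)).
  replace ((1 + 1/3) / (1 - 1/3)) with 2 in H2 by field.
  replace ((1 + 1/9) / (1 - 1/9)) with (5/4) in H5 by field.
  replace 10 with (2 ^ 3 * (5/4)) by field.
  rewrite ln_mult, ln_pow by lra. simpl INR. unfold atS in *. lra.
Qed.
Lemma poly_facts k t : (2 <= k <= 6)%nat -> 11512925 / 1000000 <= t ->
  Pkk k t <= tau k * t ^ (k - 1) /\
  2 * t ^ (k - 2) <= Pkk k t - INR (Factorial.fact (k - 1)) * t ^ (k - 1).
Proof.
  intros Hk Ht. set (d := t - 11512925 / 1000000).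
  assert (Hd : 0 <= d) by (unfold d; lra).
  assert (0 <= d ^ 2) by (apply pow_le; lra).
  assert (0 <= d ^ 3) by (apply pow_le; lra).
  assert (0 <= d ^ 4) by (apply pow_le; lra).
  assert (0 <= d ^ 5) by (apply pow_le; lra).
  replace t with (11512925 / 1000000 + d) by (unfold d; ring).
  destruct k as [|[|[|[|[|[|[|k]]]]]]]; try lia; simpl; unfold tau; split;
  match goal with |- ?a <= ?b => cut (0 <= b - a); [lra|] end;
  ring_simplify; lra.
Qed.

Lemma Apos j x : (j <= 6)%nat -> 1 < x -> 0 < A j x.
Proof.
  intros Hj Hx.
  assert (Hl : 0 < ln x) by (rewrite <- ln_1; apply ln_increasing; lra).
  unfold A. apply Rdiv_lt_0_compat.
  - destruct j as [|[|[|[|[|[|[|j]]]]]]]; try lia; simpl; nra.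
  - apply Rmult_lt_0_compat; apply pow_lt; lra.
Qed.

Lemma bern n y : 0 <= y <= 1 -> 1 - INR n * y <= (1 - y) ^ n.
Proof.
  intros Hy. induction n as [|n IH].
  - simpl; lra.
  - rewrite S_INR. simpl.
    assert (0 <= INR n) by apply pos_INR.
    assert (0 <= (1 - y) ^ n) by (apply pow_le; lra).
    nra.
Qed.

Lemma term_bounds a m x : 0 <= a -> 100000 <= x -> (1 <= m <= 6)%nat ->
  a / x ^ m <= a / (x - 1) ^ m /\ a / (x - 1) ^ m <= (1 + 7 / x) * (a / x ^ m).
Proof.
  intros Ha Hx Hm.
  assert (Hp : 0 < (x - 1) ^ m) by (apply pow_lt; lra).
  assert (Hq : 0 < x ^ m) by (apply pow_lt; lra).
  split.
  - unfold Rdiv. apply Rmult_le_compat_l; auto.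
    apply Rinv_le_contravar; auto. apply pow_incr; lra.
  - assert (H1x : 0 <= 1 / x <= 1).
    { split. apply Rlt_le, Rdiv_lt_0_compat; lra.
      apply (Rmult_le_reg_r x); [lra|]. replace (1 / x * x) with 1 by (field; lra). lra. }
    assert (Hb := bern m (1 / x) H1x).
    assert (He : (x - 1) ^ m = x ^ m * (1 - 1 / x) ^ m).
    { rewrite <- Rpow_mult_distr. f_equal. field. lra. }
    assert (HI : 1 <= INR m <= 6).
    { split; [replace 1 with (INR 1) by reflexivity|replace 6 with (INR 6) by (simpl; ring)];
      apply le_INR; lia. }
    assert (Hk : x ^ m <= (1 + 7 / x) * (x - 1) ^ m).
    { rewrite He.
      assert (0 <= (1 + 7/x) * (1 - INR m * (1/x)) - 1).
      { replace ((1 + 7/x) * (1 - INR m * (1/x)) - 1) with ((7 - INR m) / x - 7 * INR m / (x * x))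
          by (field; lra).
        assert (7 * INR m / (x * x) <= 1 / x).
        { apply (Rmult_le_reg_r (x * x)). nra.
          replace (7 * INR m / (x * x) * (x * x)) with (7 * INR m) by (field; lra).
          replace (1 / x * (x * x)) with x by (field; lra). lra. }
        assert (1 / x <= (7 - INR m) / x).
        { unfold Rdiv; apply Rmult_le_compat_r; [apply Rlt_le, Rinv_0_lt_compat; lra|lra]. }
        lra. }
      assert (0 < 1 + 7 / x) by (assert (0 < 7/x) by (apply Rdiv_lt_0_compat; lra); lra).
      assert ((1 + 7/x) * (1 - INR m * (1/x)) <= (1 + 7/x) * (1 - 1/x) ^ m)
        by (apply Rmult_le_compat_l; lra).
      nra. }
    replace ((1 + 7 / x) * (a / x ^ m)) with (a * ((1 + 7/x) * (x - 1) ^ m) / (x ^ m * (x - 1) ^ m))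
      by (field; split; lra).
    replace (a / (x - 1) ^ m) with (a * x ^ m / (x ^ m * (x - 1) ^ m)) by (field; split; lra).
    unfold Rdiv. apply Rmult_le_compat_r.
    + apply Rlt_le, Rinv_0_lt_compat, Rmult_lt_0_compat; auto.
    + apply Rmult_le_compat_l; auto.
Qed.

Lemma Ik k x : (1 <= k <= 6)%nat -> 1 < x -> ln x * A k x = Sc k x x.
Proof.
  intros Hk Hx.
  assert (Hl : 0 < ln x) by (rewrite <- ln_1; apply ln_increasing; lra).
  destruct k as [|[|[|[|[|[|[|k]]]]]]]; try lia; unfold Sc, A, Q, Pkk; simpl; field; lra.
Qed.

Lemma Sc_bounds k x : (1 <= k <= 6)%nat -> 100000 <= x ->
  Sc k x x <= Sc k x (x - 1) <= (1 + 7 / x) * Sc k x x.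
Proof.
  intros Hk Hx.
  destruct k as [|[|[|[|[|[|[|k]]]]]]]; try lia; unfold Sc.
  - pose proof (term_bounds (1 * A 0%nat x) 1%nat x ltac:(apply Rmult_le_pos; [lra|apply Rlt_le, Apos; [lia|lra]]) Hx ltac:(lia));
    lra.
  - pose proof (term_bounds (1 * A 0%nat x) 2%nat x ltac:(apply Rmult_le_pos; [lra|apply Rlt_le, Apos; [lia|lra]]) Hx ltac:(lia));
    pose proof (term_bounds (2 * A 1%nat x) 1%nat x ltac:(apply Rmult_le_pos; [lra|apply Rlt_le, Apos; [lia|lra]]) Hx ltac:(lia));
    lra.
  - pose proof (term_bounds (2 * A 0%nat x) 3%nat x ltac:(apply Rmult_le_pos; [lra|apply Rlt_le, Apos; [lia|lra]]) Hx ltac:(lia));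
    pose proof (term_bounds (3 * A 1%nat x) 2%nat x ltac:(apply Rmult_le_pos; [lra|apply Rlt_le, Apos; [lia|lra]]) Hx ltac:(lia));
    pose proof (term_bounds (3 * A 2%nat x) 1%nat x ltac:(apply Rmult_le_pos; [lra|apply Rlt_le, Apos; [lia|lra]]) Hx ltac:(lia));
    lra.
  - pose proof (term_bounds (6 * A 0%nat x) 4%nat x ltac:(apply Rmult_le_pos; [lra|apply Rlt_le, Apos; [lia|lra]]) Hx ltac:(lia));
    pose proof (term_bounds (8 * A 1%nat x) 3%nat x ltac:(apply Rmult_le_pos; [lra|apply Rlt_le, Apos; [lia|lra]]) Hx ltac:(lia));
    pose proof (term_bounds (6 * A 2%nat x) 2%nat x ltac:(apply Rmult_le_pos; [lra|apply Rlt_le, Apos; [lia|lra]]) Hx ltac:(lia));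
    pose proof (term_bounds (4 * A 3%nat x) 1%nat x ltac:(apply Rmult_le_pos; [lra|apply Rlt_le, Apos; [lia|lra]]) Hx ltac:(lia));
    lra.
  - pose proof (term_bounds (24 * A 0%nat x) 5%nat x ltac:(apply Rmult_le_pos; [lra|apply Rlt_le, Apos; [lia|lra]]) Hx ltac:(lia));
    pose proof (term_bounds (30 * A 1%nat x) 4%nat x ltac:(apply Rmult_le_pos; [lra|apply Rlt_le, Apos; [lia|lra]]) Hx ltac:(lia));
    pose proof (term_bounds (20 * A 2%nat x) 3%nat x ltac:(apply Rmult_le_pos; [lra|apply Rlt_le, Apos; [lia|lra]]) Hx ltac:(lia));
    pose proof (term_bounds (10 * A 3%nat x) 2%nat x ltac:(apply Rmult_le_pos; [lra|apply Rlt_le, Apos; [lia|lra]]) Hx ltac:(lia));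
    pose proof (term_bounds (5 * A 4%nat x) 1%nat x ltac:(apply Rmult_le_pos; [lra|apply Rlt_le, Apos; [lia|lra]]) Hx ltac:(lia));
    lra.
  - pose proof (term_bounds (120 * A 0%nat x) 6%nat x ltac:(apply Rmult_le_pos; [lra|apply Rlt_le, Apos; [lia|lra]]) Hx ltac:(lia));
    pose proof (term_bounds (144 * A 1%nat x) 5%nat x ltac:(apply Rmult_le_pos; [lra|apply Rlt_le, Apos; [lia|lra]]) Hx ltac:(lia));
    pose proof (term_bounds (90 * A 2%nat x) 4%nat x ltac:(apply Rmult_le_pos; [lra|apply Rlt_le, Apos; [lia|lra]]) Hx ltac:(lia));
    pose proof (term_bounds (40 * A 3%nat x) 3%nat x ltac:(apply Rmult_le_pos; [lra|apply Rlt_le, Apos; [lia|lra]]) Hx ltac:(lia));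
    pose proof (term_bounds (15 * A 4%nat x) 2%nat x ltac:(apply Rmult_le_pos; [lra|apply Rlt_le, Apos; [lia|lra]]) Hx ltac:(lia));
    pose proof (term_bounds (6 * A 5%nat x) 1%nat x ltac:(apply Rmult_le_pos; [lra|apply Rlt_le, Apos; [lia|lra]]) Hx ltac:(lia));
    lra.
Qed.

Lemma env x : 100000 <= x ->
  11512925 / 1000000 <= ln x /\ ln (x - 1) < ln x /\ ln x - ln (x - 1) <= 1 / (x - 1) /\
  7 * ln x / x <= 45 / 1000 /\ ln x * ln x <= 4 * x /\ ln x < x - 1.
Proof.
  intros Hx.
  assert (Ha : 11512925 / 1000000 <= ln x).
  { assert (ln (10 ^ 5) <= ln x) by (apply ln_le; [apply pow_lt; lra|lra]).
    rewrite ln_pow in H by lra. simpl INR in H. pose proof ln10_lb. lra. }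
  assert (Hb : ln (x - 1) < ln x) by (apply ln_increasing; lra).
  assert (Hc : ln x - ln (x - 1) <= 1 / (x - 1)).
  { rewrite <- ln_div by lra.
    assert (1 < x / (x - 1)).
    { apply (Rmult_lt_reg_r (x - 1)); [lra|]. replace (x / (x - 1) * (x - 1)) with x by (field; lra). lra. }
    pose proof (ln_lt_sub1 _ H).
    replace (x / (x - 1) - 1) with (1 / (x - 1)) in H0 by (field; lra). lra. }
  set (r := sqrt x).
  assert (Hr : r * r = x) by (apply sqrt_sqrt; lra).
  assert (Hr0 : 0 <= r) by apply sqrt_pos.
  assert (Hr1 : 316 <= r) by nra.
  assert (Hl : ln x < 2 * r).
  { rewrite <- Hr, ln_mult by lra. pose proof (ln_lt_sub1 r ltac:(lra)). lra. }
  assert (Hl0 : 0 < ln x) by lra.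
  split; [lra|split; [lra|split; [lra|split]]].
  - apply (Rmult_le_reg_r x); [lra|].
    replace (7 * ln x / x * x) with (7 * ln x) by (field; lra). nra.
  - split; [nra|].
    pose proof (ln_lt_sub1 x ltac:(lra)). lra.
Qed.

Lemma core L t s x Ak S S' : 0 < Ak -> t * Ak = S -> S <= S' -> S' <= (1 + 7 / x) * S ->
  s < t -> 0 < x ->
  (L + s) * Ak - S' < L * Ak /\ (L - (t - s + 7 * t / x)) * Ak <= (L + s) * Ak - S'.
Proof.
  intros HA HS H1 H2 Hst Hx. split.
  - nra.
  - assert ((1 + 7 / x) * S = t * Ak + 7 * t / x * Ak) by (rewrite <- HS; field; lra).
    nra.
Qed.

Lemma lnN_lb N : powerRZ 10 100000 <= N -> 230000 <= ln N.
Proof.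
  intros HN.
  rewrite powerRZ_Rpower in HN by lra.
  assert (0 < Rpower 10 (IZR 100000)) by (unfold Rpower; apply exp_pos).
  assert (ln (Rpower 10 (IZR 100000)) <= ln N) by (apply ln_le; lra).
  unfold Rpower in H0. rewrite ln_exp in H0. pose proof ln10_lb. lra.
Qed.

Lemma mainG N k x : 230000 <= ln N -> (1 <= k <= 6)%nat -> 100000 <= x ->
  exists eps, 0 <= eps <= 1 / 20 /\ eps * ln x <= 30 /\
   (ln N - eps) * A k x <= gkN k N x /\ gkN k N x < ln N * A k x.
Proof.
  intros HL Hk Hx.
  destruct (env x Hx) as (E1 & E2 & E3 & E4 & E5 & E6).
  assert (HA := Apos k x ltac:(lia) ltac:(lra)).
  assert (HI := Ik k x Hk ltac:(lra)).
  assert (HS := Sc_bounds k x Hk Hx).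
  destruct (core (ln N) (ln x) (ln (x - 1)) x (A k x) (Sc k x x) (Sc k x (x - 1))
     HA HI ltac:(lra) ltac:(lra) E2 ltac:(lra)) as [C1 C2].
  exists (ln x - ln (x - 1) + 7 * ln x / x).
  rewrite gG by (lia || lra). unfold G.
  assert (1 / (x - 1) <= 1 / 1000).
  { apply (Rmult_le_reg_r (x - 1)); [lra|]. replace (1 / (x - 1) * (x - 1)) with 1 by (field; lra). lra. }
  assert (0 <= 7 * ln x / x) by (apply Rmult_le_pos; [lra|apply Rlt_le, Rinv_0_lt_compat; lra]).
  split; [lra|split; [|split; lra]].
  assert (ln x / (x - 1) <= 1).
  { apply (Rmult_le_reg_r (x - 1)); [lra|]. replace (ln x / (x - 1) * (x - 1)) with (ln x) by (field; lra). lra. }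
  assert (7 * ln x / x * ln x <= 28).
  { replace (7 * ln x / x * ln x) with (7 * (ln x * ln x) / x) by (field; lra).
    apply (Rmult_le_reg_r x); [lra|]. replace (7 * (ln x * ln x) / x * x) with (7 * (ln x * ln x)) by (field; lra). lra. }
  assert ((ln x - ln (x - 1)) * ln x <= 1 / (x - 1) * ln x) by (apply Rmult_le_compat_r; lra).
  replace (1 / (x - 1) * ln x) with (ln x / (x - 1)) in H3 by (field; lra).
  nra.
Qed.

Lemma A_eq k x : (1 <= k)%nat -> A k x = Pkk k (ln x) / (x ^ k * ln x ^ (k + 1)).
Proof. intros Hk. destruct k; [lia|reflexivity]. Qed.

Theorem lemma3p1 (N : R) (hN : powerRZ 10 100000 <= N) :
  (forall (k : nat) (x : R), (1 <= k <= 6)%nat -> 10 ^ 5 <= x ->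
     (999999 / 1000000) * Pkk k (ln x) * ln N / (x ^ k * (ln x) ^ (k + 1))
       < gkN k N x /\
     gkN k N x < Pkk k (ln x) * ln N / (x ^ k * (ln x) ^ (k + 1))) /\
  (forall (k : nat) (x : R), (2 <= k <= 6)%nat -> 10 ^ 5 <= x ->
     INR (Factorial.fact (k - 1)) * ln N / (x ^ k * (ln x) ^ 2) < gkN k N x /\
     gkN k N x < tau k * ln N / (x ^ k * (ln x) ^ 2)) /\
  (forall x : R, 10 ^ 5 <= x ->
     (999999 / 1000000) * ln N / (x * (ln x) ^ 2) < gkN 1 N x /\
     gkN 1 N x < ln N / (x * (ln x) ^ 2)).
Proof.
  assert (HL := lnN_lb N hN).
  assert (P1 : forall (k : nat) (x : R), (1 <= k <= 6)%nat -> 10 ^ 5 <= x ->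
     (999999 / 1000000) * Pkk k (ln x) * ln N / (x ^ k * (ln x) ^ (k + 1))
       < gkN k N x /\
     gkN k N x < Pkk k (ln x) * ln N / (x ^ k * (ln x) ^ (k + 1))).
  { intros k x Hk Hx. replace (10 ^ 5) with 100000 in Hx by ring.
    destruct (mainG N k x HL Hk Hx) as (eps & He & Het & Hlo & Hup).
    assert (HA := Apos k x ltac:(lia) ltac:(lra)).
    destruct (env x Hx) as (E1 & _).
    assert (HD : 0 < x ^ k * ln x ^ (k + 1)) by (apply Rmult_lt_0_compat; apply pow_lt; lra).
    rewrite A_eq in HA, Hlo, Hup by lia.
    set (D := x ^ k * ln x ^ (k + 1)) in *.
    set (P := Pkk k (ln x)) in *.
    split.
    - replace (999999 / 1000000 * P * ln N / D) with (999999 / 1000000 * ln N * (P / D))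
        by (field; lra). nra.
    - replace (P * ln N / D) with (ln N * (P / D)) by (field; lra). lra. }
  split; [exact P1|split].
  - intros k x Hk Hx. replace (10 ^ 5) with 100000 in Hx by ring.
    destruct (mainG N k x HL ltac:(lia) Hx) as (eps & He & Het & Hlo & Hup).
    assert (HA := Apos k x ltac:(lia) ltac:(lra)).
    destruct (env x Hx) as (E1 & _).
    destruct (poly_facts k (ln x) Hk E1) as [PF1 PF2].
    rewrite A_eq in HA, Hlo, Hup by lia.
    set (t := ln x) in *.
    set (u := t ^ (k - 2)).
    assert (Hu : 0 < u) by (apply pow_lt; lra).
    assert (Hk1 : t ^ (k + 1) = t ^ 2 * (t * u)).
    { unfold u. replace (k + 1)%nat with (k - 2 + 3)%nat by lia. rewrite pow_add. ring. }
    assert (Hk2 : t ^ (k - 1) = t * u).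
    { unfold u. replace (k - 1)%nat with (k - 2 + 1)%nat by lia. rewrite pow_add. ring. }
    rewrite Hk1 in HA, Hlo, Hup. rewrite Hk2 in PF1, PF2.
    assert (Hxk : 0 < x ^ k) by (apply pow_lt; lra).
    assert (HD : 0 < x ^ k * (t ^ 2 * (t * u))) by (apply Rmult_lt_0_compat; [lra|]; apply Rmult_lt_0_compat; [apply pow_lt|]; nra).
    set (D := x ^ k * (t ^ 2 * (t * u))) in *.
    set (P := Pkk k t) in *.
    set (M := INR (Factorial.fact (k - 1))) in *.
    assert (HM : 0 < M <= 120).
    { unfold M. clear -Hk.
      destruct k as [|[|[|[|[|[|[|k]]]]]]]; try lia; simpl; lra. }
    split.
    + replace (M * ln N / (x ^ k * t ^ 2)) with (M * t * u * ln N / D) by (unfold D; field; repeat split; nra).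
      apply (Rlt_le_trans _ ((ln N - eps) * (P / D))); [|exact Hlo].
      replace ((ln N - eps) * (P / D)) with ((ln N - eps) * P / D) by (field; lra).
      apply Rmult_lt_compat_r; [apply Rinv_0_lt_compat; lra|].
      fold u in PF2. assert (h1 : (ln N - eps) * (M * t * u + 2 * u) <= (ln N - eps) * P) by (apply Rmult_le_compat_l; lra).
      assert (h2 : (eps * t) * (M * u) <= 30 * (120 * u)).
      { assert (0 <= eps * t) by nra. assert (0 <= M * u) by nra. assert (M * u <= 120 * u) by nra. apply Rmult_le_compat; lra. }
      assert (h3 : eps * u <= 1 / 20 * u) by (apply Rmult_le_compat_r; lra).
      assert (h4 : 230000 * u <= ln N * u) by (apply Rmult_le_compat_r; lra).
      nra.
    + replace (tau k * ln N / (x ^ k * t ^ 2)) with (ln N * (tau k * (t * u)) / D) by (unfold D; field; repeat split; nra).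
      apply (Rlt_le_trans _ _ _ Hup).
      replace (ln N * (P / D)) with (ln N * P / D) by (field; lra).
      apply Rmult_le_compat_r; [apply Rlt_le, Rinv_0_lt_compat; lra|].
      apply Rmult_le_compat_l; lra.
  - intros x Hx. destruct (P1 1%nat x ltac:(lia) Hx) as [a b].
    assert (Hx' : 100000 <= x) by (replace (10 ^ 5) with 100000 in Hx by ring; lra).
    destruct (env x Hx') as (E1 & _).
    simpl Pkk in a, b.
    replace (x ^ 1 * ln x ^ (1 + 1)) with (x * ln x ^ 2) in a, b by (simpl; ring).
    split.
    + replace (999999 / 1000000 * ln N / (x * ln x ^ 2)) with (999999 / 1000000 * 1 * ln N / (x * ln x ^ 2)) by (unfold Rdiv; ring). exact a.
    + replace (ln N / (x * ln x ^ 2)) with (1 * ln N / (x * ln x ^ 2)) by (unfold Rdiv; ring). exact b.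
Qed.
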